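(* Let $\alpha\in(0,1]$ and $a,b\in\mathbb{R}$ with $0\le a<b$. Let $f:[a,b]\to[0,\infty)$ and $g:[a,b]\to[0,1]$ be $\alpha$-fractional integrable on $[a,b]$, with $f$ decreasing. Let $$ \ell:=\frac{\alpha(b-a)}{b^\alpha-a^\alpha}\int_a^b g(t)\,d_\alpha t. $$ Then $$ \int_{b-\ell}^b f(t)\,d_\alpha t\le\int_a^b f(t)g(t)\,d_\alpha t\le\int_a^{a+\ell}f(t)\,d_\alpha t. $$
   Context: For $\alpha\in(0,1]$ and $0\le a<b$, $\int_a^b f(t)\,d_\alpha t:=\int_a^b f(t)\,t^{\alpha-1}\,dt$, and $f$ is called $\alpha$-fractional integrable on $[a,b]$ if this integral exists and is finite. *)

(* Defs.v *)
From HB Require Import structures.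
From mathcomp Require Import all_boot all_order all_algebra.
From mathcomp Require Import all_classical all_reals all_analysis.
Set Implicit Arguments. Unset Strict Implicit. Unset Printing Implicit Defensive.
Import Order.TTheory GRing.Theory Num.Theory.
Import numFieldNormedType.Exports.
Local Open Scope classical_set_scope.
Local Open Scope ring_scope.

Definition frac_integrand {R : realType} (alpha : R) (f : R -> R) (t : R) : R :=
  f t * t `^ (alpha - 1).

Definition frac_integrable {R : realType} (alpha a b : R) (f : R -> R) : Prop :=
  (@lebesgue_measure R).-integrable `[a, b]
     (fun t => (frac_integrand alpha f t)%:E).

Definition frac_int {R : realType} (alpha a b : R) (f : R -> R) : R :=
  Rintegral (@lebesgue_measure R) `[a, b] (frac_integrand alpha f).

(* Main.v *)
Require Import Defs.
From HB Require Import structures.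
Set Warnings "-notation-overridden,-ambiguous-paths,-notation-incompatible-prefix".
From mathcomp Require Import all_boot all_order all_algebra.
From mathcomp Require Import all_classical all_reals all_analysis.
From mathcomp Require Import ring lra.
From mathcomp Require Import measurable_realfun.
Set Implicit Arguments. Unset Strict Implicit. Unset Printing Implicit Defensive.
Import Order.TTheory GRing.Theory Num.Theory.
Import numFieldNormedType.Exports.
Local Open Scope classical_set_scope.
Local Open Scope ring_scope.
Lemma powR_LR (R : realType) (al u v : R) : 0 < al -> 0 <= u -> u < v ->
  derivable_oo_LRcontinuous (@powR R ^~ al) u v.
Proof.
move=> al0 x0 xy; split.
- move=> t; rewrite in_itv/= => /andP[xt _]; apply: derivable_powR.
  by rewrite in_itv/= andbT; exact: le_lt_trans x0 xt.
- move: x0; rewrite le_eqVlt => /predU1P[<-|x0].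
    by rewrite powR0 ?gt_eqF//; exact: powR_cvg0.
  apply: cvg_at_right_filter.
  have := @derivable_powR R 1 al u; rewrite in_itv/= andbT => /(_ x0).
  by move/derivable1_diffP/differentiable_continuous.
- apply: cvg_at_left_filter.
  have := @derivable_powR R 1 al v; rewrite in_itv/= andbT.
  move=> /(_ (le_lt_trans x0 xy)).
  by move/derivable1_diffP/differentiable_continuous.
Qed.

Lemma int_w_pos (R : realType) (al x y : R) : 0 < al -> 0 < x -> x <= y ->
 (\int[lebesgue_measure]_(t in `[x, y]) (t `^ (al - 1))%:E =
   ((y `^ al - x `^ al) / al)%:E)%E.
Proof.
move=> al0 x0; rewrite le_eqVlt => /predU1P[<-|xy].
  by rewrite set_itv1 integral_set1 subrr mul0r.
have dw : {in `[x, y], forall t, derivable (fun t : R => t `^ (al - 1)) t 1}.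
  move=> t; rewrite in_itv/= => /andP[xt _].
  apply: derivable_powR; rewrite in_itv/= andbT; exact: lt_le_trans x0 xt.
have cw : {within `[x, y], continuous (fun t : R => t `^ (al - 1))}.
  exact: derivable_within_continuous.
have iw : lebesgue_measure.-integrable `[x,y] (EFin \o (fun t : R => t`^(al-1))).
  apply: continuous_compact_integrable => //; exact: segment_compact.
have cw' : {within `[x, y], continuous (fun t : R => al * t `^ (al - 1))}.
  apply: derivable_within_continuous => t tI.
  apply: derivableM; first exact: derivable_cst.
  exact: dw.
have := @continuous_FTC2 R (fun t => al * t `^ (al - 1)) (@powR R ^~ al) x y xy
  cw' (powR_LR al0 (ltW x0) xy).
have F' : {in `]x, y[, (@powR R ^~ al)^`()%classic =1 (fun t => al * t `^ (al - 1))}.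
  move=> t; rewrite in_itv/= => /andP[xt _]; apply: powR_derive1.
  by rewrite in_itv/= andbT; exact: lt_trans x0 xt.
move=> /(_ F').
under eq_integral do rewrite EFinM.
rewrite integralZl//.
have := @integrable_fin_num _ _ _ _ _ _ _ iw.
move=> /(_ (measurable_itv _)).
move: (\int[_]_(_ in _) _)%E => I; case: I => [r _||] //.
rewrite -EFinM -EFinB => -[<-].
by rewrite [al * r]mulrC mulfK ?gt_eqF.
Qed.

Lemma mw (R : realType) (p : R) (D : set R) :
  measurable_fun D (fun t : R => (t `^ p)%:E).
Proof.
apply/measurable_EFinP; apply: measurable_funTS.
exact: measurable_realfun.measurable_powR.
Qed.

Lemma int_w0 (R : realType) (al y : R) : 0 < al -> 0 < y ->
 (\int[lebesgue_measure]_(t in `[0%R, y]) (t `^ (al - 1))%:E =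
   ((y `^ al) / al)%:E)%E.
Proof.
move=> al0 y0.
rewrite -(@integral_itv_obnd_cbnd R 0 (BRight y)); last exact: mw.
pose F := fun n : nat => `[y / n.+1%:R, y].
have Fpos : forall n : nat, 0 < y / n.+1%:R by move=> n; rewrite divr_gt0// ltr0n.
have bigF : \bigcup_n [set` F n] = [set` `]0, y]].
  apply/seteqP; split.
    move=> t [n _]; rewrite /= !in_itv/= => /andP[h1 ->]; rewrite andbT.
    exact: lt_le_trans (Fpos n) h1.
  move=> t; rewrite /= in_itv/= => /andP[t0 ty].
  exists (Num.truncn (y / t)) => //=; rewrite in_itv/= ty andbT.
  rewrite ler_pdivrMr ?ltr0n// mulrC -ler_pdivrMr//.
  exact/ltW/truncnS_gt.
have ndF : {homo (fun n => [set` F n]) : n m / (n <= m)%N >-> (n <= m)%O}.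
  apply/nondecreasing_seqP => n; rewrite subsetEset => t /=.
  rewrite !in_itv/= => /andP[h1 ->]; rewrite andbT; apply: le_trans h1.
  rewrite ler_pM2l// lef_pV2 ?posrE ?ltr0n// ler_nat.
  by [].
have := @ge0_nondecreasing_set_cvg_integral _ (measurableTypeR R) R
  (fun n => [set` F n]) (EFin \o (@powR R ^~ (al - 1))) (@lebesgue_measure R) ndF (fun n => measurable_itv _) (fun n => @mw R (al - 1) _)
  (fun n t _ => powR_ge0 _ _).
rewrite bigF /= => cv.
have Fv : forall n, (\int[lebesgue_measure]_(t in [set` F n]) (t `^ (al - 1))%:E =
    ((y `^ al - (y / n.+1%:R) `^ al) / al)%:E)%E.
  move=> n; apply: int_w_pos => //.
  by rewrite ler_pdivrMr ?ltr0n// ler_peMr ?ler1n // ltW.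
set S := (\int[lebesgue_measure]_(x in `]0%R, y]) (x `^ (al - 1))%:E)%E in cv *.
have Sle : (S <= ((y `^ al) / al)%:E)%E.
  rewrite -(cvg_lim _ cv) //; apply: lime_le; first by apply/cvg_ex; eexists; exact: cv.
  apply: nearW => n /=; rewrite Fv lee_fin ler_pM2r ?invr_gt0//.
  by rewrite gerBl powR_ge0.
have Sge : forall e, 0 < e -> e <= y -> (((y `^ al - e `^ al) / al)%:E <= S)%E.
  move=> e e0 ey; rewrite -int_w_pos//; apply: ge0_subset_integral => //.
  - exact: mw.
  - by move=> t _; rewrite lee_fin powR_ge0.
  - move=> t /=; rewrite !in_itv/= => /andP[et ->]; rewrite andbT.
    exact: lt_le_trans e0 et.
have S0 : (0 <= S)%E by apply: integral_ge0 => t _; rewrite lee_fin powR_ge0.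
move: S Sle Sge S0 {cv} => [r||] //= Sle Sge _.
rewrite lee_fin in Sle; congr EFin; apply/eqP; rewrite eq_le Sle /=.
apply/ler_addgt0Pr => e e0.
pose d := Num.min y ((al * e) `^ al^-1).
have ae0 : 0 < al * e by rewrite mulr_gt0.
have d0 : 0 < d by rewrite lt_min y0 powR_gt0.
have dy : d <= y by rewrite ge_min lexx.
have := Sge d d0 dy; rewrite lee_fin => h.
have dal : d `^ al <= al * e.
  have -> : al * e = ((al * e) `^ al^-1) `^ al.
    by rewrite -powRrM mulVf ?gt_eqF// powRr1// ltW.
  apply: ge0_ler_powR.
  - exact: ltW.
  - by rewrite nnegrE ltW.
  - by rewrite nnegrE powR_ge0.
  - by rewrite /d ge_min lexx orbT.
rewrite -lerBlDr; apply: le_trans h.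
have -> : y `^ al / al - e = (y `^ al - al * e) / al.
  by field; rewrite gt_eqF.
apply: ler_wpM2r; first by rewrite invr_ge0 ltW.
by rewrite lerD2l lerN2.
Qed.

Lemma int_w (R : realType) (al x y : R) : 0 < al -> 0 <= x -> x <= y ->
 (\int[lebesgue_measure]_(t in `[x, y]) (t `^ (al - 1))%:E =
   ((y `^ al - x `^ al) / al)%:E)%E.
Proof.
move=> al0; rewrite le_eqVlt => /predU1P[<-|x0] xy; last exact: int_w_pos.
move: xy; rewrite le_eqVlt => /predU1P[<-|y0].
  by rewrite set_itv1 integral_set1 subrr mul0r.
by rewrite int_w0// powR0 ?gt_eqF// subr0.
Qed.

Lemma int_w_integrable (R : realType) (al x y : R) : 0 < al -> 0 <= x -> x <= y ->
  (@lebesgue_measure R).-integrable `[x, y] (fun t => (t `^ (al - 1))%:E).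
Proof.
move=> al0 x0 xy; apply/integrableP; split; first exact: mw.
under eq_integral => t _ do rewrite gee0_abs ?lee_fin ?powR_ge0//.
by rewrite int_w// ltry.
Qed.

Lemma Rint_w (R : realType) (al x y : R) : 0 < al -> 0 <= x -> x <= y ->
  Rintegral (@lebesgue_measure R) `[x, y] (fun t => t `^ (al - 1)) =
   (y `^ al - x `^ al) / al.
Proof. by move=> al0 x0 xy; rewrite /Rintegral int_w. Qed.

Lemma powR_anti (R : realType) (al s t : R) : al <= 1 -> 0 < s -> s <= t ->
  t `^ (al - 1) <= s `^ (al - 1).
Proof.
move=> al1 s0 st.
have t0 : 0 < t by exact: lt_le_trans s0 st.
rewrite -(opprB 1 al) !powRN lef_pV2 ?posrE ?powR_gt0//.
apply: ge0_ler_powR => //; first by rewrite subr_ge0.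
- by rewrite nnegrE ltW.
- by rewrite nnegrE ltW.
Qed.

Lemma conc (R : realType) (al a c b : R) : 0 < al -> al <= 1 ->
  0 <= a -> a <= c -> c <= b ->
  (c - a) * (b `^ al - a `^ al) <= (c `^ al - a `^ al) * (b - a).
Proof.
move=> al0 al1 a0; rewrite le_eqVlt => /predU1P[<-|ac].
  by rewrite !subrr mul0r mul0r.
rewrite le_eqVlt => /predU1P[<-|cb]; first by rewrite mulrC.
have dP : forall u v, 0 <= u -> u < v -> exists2 z, z \in `]u, v[ &
    v `^ al - u `^ al = al * z `^ (al - 1) * (v - u).
  move=> u v u0 uv; apply: (@MVT _ (@powR R ^~ al) (fun z => al * z `^ (al - 1))) => //.
    move=> z; rewrite in_itv/= => /andP[uz _]; apply: is_derive1_powR.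
    exact: le_lt_trans u0 uz.
  exact/derivable_oo_LRcontinuous_within/powR_LR.
have [z1 /[!in_itv] /andP[az1 z1c] e1] := dP a c a0 ac.
have [z2 /[!in_itv] /andP[cz2 z2b] e2] := dP c b (le_trans a0 (ltW ac)) cb.
have z10 : 0 < z1 by exact: le_lt_trans a0 az1.
have h := powR_anti al1 z10 (ltW (lt_trans z1c cz2)).
have -> : b `^ al - a `^ al = (b `^ al - c `^ al) + (c `^ al - a `^ al) by ring.
rewrite e1 e2.
have k : 0 <= al * (c - a) * (b - c).
  by rewrite mulr_ge0 ?mulr_ge0 ?subr_ge0 ?ltW.
have h' : 0 <= z1 `^ (al - 1) - z2 `^ (al - 1) by rewrite subr_ge0.
have := mulr_ge0 h' k.
move=> H; nra.
Qed.

Section Helpers.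
Variable R : realType.
Local Notation mu := (@lebesgue_measure R).

Lemma iD (x y : R) (h1 h2 : R -> R) :
  mu.-integrable `[x, y] (EFin \o h1) -> mu.-integrable `[x, y] (EFin \o h2) ->
  mu.-integrable `[x, y] (EFin \o (fun t => h1 t + h2 t)).
Proof.
move=> i1 i2; have := integrableD _ i1 i2.
move=> /(_ (measurable_itv _)).
apply: eq_integrable; first exact: measurable_itv.
by move=> t _ /=; rewrite EFinD.
Qed.

Lemma iZ (x y : R) (k : R) (h : R -> R) :
  mu.-integrable `[x, y] (EFin \o h) ->
  mu.-integrable `[x, y] (EFin \o (fun t => k * h t)).
Proof.
move=> i1; have := integrableZl _ k i1.
move=> /(_ (measurable_itv _)).
apply: eq_integrable; first exact: measurable_itv.
by move=> t _ /=; rewrite EFinM.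
Qed.

Lemma iB (x y : R) (h1 h2 : R -> R) :
  mu.-integrable `[x, y] (EFin \o h1) -> mu.-integrable `[x, y] (EFin \o h2) ->
  mu.-integrable `[x, y] (EFin \o (fun t => h1 t - h2 t)).
Proof.
move=> i1 i2; have := iD i1 (iZ (-1) i2).
apply: eq_integrable; first exact: measurable_itv.
by move=> t _ /=; rewrite mulN1r.
Qed.

Lemma iP (x y c d : R) (h : R -> R) : x <= c -> d <= y ->
  mu.-integrable `[x, y] (EFin \o h) ->
  mu.-integrable `[x, y] (EFin \o (h \_ `[c, d])).
Proof.
move=> xc dy ih; rewrite -restrict_EFin.
have H := integrable_restrict mu (measurable_itv `[c, d]) (measurable_itv `[x, y]) (EFin \o h).
apply/H.
by apply: integrableS ih => //; first exact: measurableI.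
Qed.

Lemma RP (x y c d : R) (h : R -> R) : x <= c -> d <= y ->
  Rintegral mu `[x, y] (h \_ `[c, d]) = Rintegral mu `[c, d] h.
Proof.
move=> xc dy; rewrite -Rintegral_mkcondr setIidr//.
move=> t /=; rewrite !in_itv/= => /andP[ct td].
by rewrite (le_trans xc ct) (le_trans td dy).
Qed.

End Helpers.

Lemma powR_id (R : realType) (al t : R) : 0 <= t ->
  t `^ (al - 1) * t `^ (al - 1) * t `^ (1 - al) = t `^ (al - 1).
Proof.
rewrite le_eqVlt => /predU1P[<-|t0].
  have [->|al1] := eqVneq al 1.
    by rewrite subrr !powRr0 !mulr1.
  by rewrite powR0 ?mul0r// subr_eq0.
rewrite -mulrA -powRD; last by rewrite (gt_eqF t0) implybT.
have -> : al - 1 + (1 - al) = 0 by ring.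
by rewrite powRr0 mulr1.
Qed.

Unset Implicit Arguments.

Theorem mainTheorem5 (R : realType) (alpha a b : R) (f g : R -> R) :
  0 < alpha -> alpha <= 1 -> 0 <= a -> a < b ->
  (forall t, a <= t <= b -> 0 <= f t) ->
  (forall t, a <= t <= b -> 0 <= g t <= 1) ->
  frac_integrable alpha a b f ->
  frac_integrable alpha a b g ->
  (forall x y, a <= x -> x <= y -> y <= b -> f y <= f x) ->
  let l := alpha * (b - a) / (b `^ alpha - a `^ alpha) * frac_int alpha a b g in
  frac_int alpha (b - l) b f <= frac_int alpha a b (fun t => f t * g t) /\
  frac_int alpha a b (fun t => f t * g t) <= frac_int alpha a (a + l) f.
Proof.
move=> al0 al1 a0 ab f0 g01 fI gI fdec l.
rewrite /frac_int.
set w := fun t : R => t `^ (alpha - 1).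
set fw := frac_integrand alpha f.
set gw := frac_integrand alpha g.
set fgw := frac_integrand alpha (fun t => f t * g t).
pose G := Rintegral (@lebesgue_measure R) `[a, b] gw.
have w0 : forall t, 0 <= w t by move=> t; exact: powR_ge0.
have wI : lebesgue_measure.-integrable `[a, b] (EFin \o w).
  exact: int_w_integrable (ltW ab).
have fI' : lebesgue_measure.-integrable `[a, b] (EFin \o fw) by exact: fI.
have gI' : lebesgue_measure.-integrable `[a, b] (EFin \o gw) by exact: gI.
have inI : forall t, `[a, b]%classic t -> a <= t <= b.
  by move=> t /=; rewrite in_itv.
have mfw : measurable_fun `[a, b] fw.
  by apply/measurable_EFinP; case/integrableP: fI'.
have mgw : measurable_fun `[a, b] gw.
  by apply/measurable_EFinP; case/integrableP: gI'.
have fgI : lebesgue_measure.-integrable `[a, b] (EFin \o fgw).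
  apply: (le_integrable _ _ _ fI'); first exact: measurable_itv.
    apply/measurable_EFinP.
    apply: (eq_measurable_fun (fun t => fw t * gw t * t `^ (1 - alpha))).
      move=> t; rewrite inE => /inI /andP[ta tb].
      rewrite /fw /gw /fgw /frac_integrand.
      have e := powR_id alpha (le_trans a0 ta).
      by rewrite -[in RHS]e; ring.
    apply: measurable_funM; first exact: measurable_funM.
    apply: measurable_funTS; exact: measurable_realfun.measurable_powR.
  move=> t /inI /andP[ta tb] /=; rewrite lee_fin.
  have /andP[g0 g1] := g01 t ltac:(by rewrite ta tb).
  rewrite /fgw /fw /frac_integrand -mulrA [g t * _]mulrC mulrA normrM.
  by rewrite ler_piMr // ger0_norm.
have G0 : 0 <= G.
  rewrite /G; apply: Rintegral_ge0 => t /inI /andP[ta tb].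
  have /andP[g0 g1] := g01 t ltac:(by rewrite ta tb).
  by rewrite /gw /frac_integrand; apply: mulr_ge0 => //; exact: powR_ge0.
have Wv := Rint_w al0 a0 (ltW ab).
have GW : G <= (b `^ alpha - a `^ alpha) / alpha.
  rewrite -Wv /G; apply: le_Rintegral => //.
  move=> t /inI /andP[ta tb].
  have /andP[g0 g1] := g01 t ltac:(by rewrite ta tb).
  by apply: ler_piMl => //; exact: powR_ge0.
have BA : 0 < b `^ alpha - a `^ alpha.
  rewrite subr_gt0; apply: gt0_ltr_powR; rewrite ?nnegrE //.
  exact: (le_trans a0 (ltW ab)).
have ba : 0 < b - a by rewrite subr_gt0.
have Gl : G = l * (b `^ alpha - a `^ alpha) / (alpha * (b - a)).
  rewrite /l /frac_int -/gw -/G; field.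
  by rewrite !gt_eqF.
have l0 : 0 <= l.
  by rewrite /l mulr_ge0// divr_ge0 ?mulr_ge0 ?ltW.
have lba : l <= b - a.
  have : l * (b `^ alpha - a `^ alpha) / (alpha * (b - a)) <= (b `^ alpha - a `^ alpha) / alpha.
    by rewrite -Gl.
  rewrite ler_pdivrMr ?mulr_gt0//.
  have -> : (b `^ alpha - a `^ alpha) / alpha * (alpha * (b - a)) =
    (b - a) * (b `^ alpha - a `^ alpha) by field; rewrite gt_eqF.
  by rewrite ler_pM2r.
split.
- set c := b - l.
  have ac : a <= c by rewrite /c; lra.
  have cb : c <= b by rewrite /c; lra.
  have key : Rintegral lebesgue_measure `[a, b]
        (fun t => (fw \_ `[c, b]) t + f c * (gw t - (w \_ `[c, b]) t)) <=
      Rintegral lebesgue_measure `[a, b] fgw.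
    apply: le_Rintegral => //.
      apply: iD; first exact: iP.
      by apply: iZ; apply: iB => //; exact: iP.
    move=> t /inI /andP[ta tb]; rewrite !patchE.
    have /andP[g0 g1] := g01 t ltac:(by rewrite ta tb).
    have wt := w0 t.
    case: ifPn => [|/negP]; rewrite inE /= in_itv /=.
      move=> /andP[ct _]; have fct := fdec c t ac ct tb.
      rewrite /fw /gw /w /frac_integrand.
      set W := t `^ (alpha - 1).
      rewrite -subr_ge0.
      have -> : f t * g t * W - (f t * W + f c * (g t * W - W)) =
        (f c - f t) * (1 - g t) * W by ring.
      by rewrite !mulr_ge0 // subr_ge0.
    move/negP; rewrite tb andbT -ltNge => tc.
    have fct := fdec t c ta (ltW tc) cb.
    have -> : point = 0 :> R by [].
    rewrite /fw /gw /w /frac_integrand add0r subr0.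
    set W := t `^ (alpha - 1).
    rewrite -subr_ge0.
    have -> : f t * g t * W - f c * (g t * W) = (f t - f c) * g t * W by ring.
    by rewrite !mulr_ge0 // subr_ge0.
  have i1 := iP ac (lexx b) fI'.
  have i2 := iP ac (lexx b) wI.
  have i3 := iB gI' i2.
  rewrite (RintegralD _ i1 (iZ (f c) i3)) in key; last exact: measurable_itv.
  rewrite RintegralZl in key; try exact: measurable_itv; try exact: i3.
  rewrite (RintegralB _ gI' i2) in key; last exact: measurable_itv.
  rewrite !RP // in key.
  rewrite (Rint_w al0 (le_trans a0 ac) cb) in key.
  apply: le_trans key; rewrite lerDl.
  apply: mulr_ge0; first by apply: f0; rewrite ac cb.
  rewrite -/G subr_ge0 Gl ler_pdivlMr ?mulr_gt0//.
  have -> : (b `^ alpha - c `^ alpha) / alpha * (alpha * (b - a)) =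
    (b `^ alpha - c `^ alpha) * (b - a) by field; rewrite gt_eqF.
  have -> : l = b - c by rewrite /c; ring.
  have h := conc al0 al1 a0 ac cb.
  rewrite -subr_ge0; rewrite -subr_ge0 in h.
  set B := b `^ alpha; set A := a `^ alpha; set C := c `^ alpha.
  have -> : (b - c) * (B - A) - (B - C) * (b - a) =
    (C - A) * (b - a) - (c - a) * (B - A) by ring.
  exact: h.
- set c := a + l.
  have ac : a <= c by rewrite /c; lra.
  have cb : c <= b by rewrite /c; lra.
  have key : Rintegral lebesgue_measure `[a, b] fgw <=
      Rintegral lebesgue_measure `[a, b]
        (fun t => (fw \_ `[a, c]) t + f c * (gw t - (w \_ `[a, c]) t)).
    apply: le_Rintegral => //.
      apply: iD; first exact: iP.
      by apply: iZ; apply: iB => //; exact: iP.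
    move=> t /inI /andP[ta tb]; rewrite !patchE.
    have /andP[g0 g1] := g01 t ltac:(by rewrite ta tb).
    have wt := w0 t.
    case: ifPn => [|/negP]; rewrite inE /= in_itv /=.
      move=> /andP[_ tc]; have fct := fdec t c ta tc cb.
      rewrite /fw /gw /w /frac_integrand.
      set W := t `^ (alpha - 1).
      rewrite -subr_ge0.
      have -> : f t * W + f c * (g t * W - W) - f t * g t * W =
        (f t - f c) * (1 - g t) * W by ring.
      by rewrite !mulr_ge0 // subr_ge0.
    move/negP; rewrite ta /= -ltNge => ct.
    have fct := fdec c t ac (ltW ct) tb.
    have -> : point = 0 :> R by [].
    rewrite /fw /gw /w /frac_integrand add0r subr0.
    set W := t `^ (alpha - 1).
    rewrite -subr_ge0.
    have -> : f c * (g t * W) - f t * g t * W = (f c - f t) * g t * W by ring.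
    by rewrite !mulr_ge0 // subr_ge0.
  have i1 := iP (lexx a) cb fI'.
  have i2 := iP (lexx a) cb wI.
  have i3 := iB gI' i2.
  rewrite (RintegralD _ i1 (iZ (f c) i3)) in key; last exact: measurable_itv.
  rewrite RintegralZl in key; try exact: measurable_itv; try exact: i3.
  rewrite (RintegralB _ gI' i2) in key; last exact: measurable_itv.
  rewrite !RP // in key.
  rewrite (Rint_w al0 a0 ac) in key.
  apply: le_trans key _; rewrite gerDl.
  apply: mulr_ge0_le0; first by apply: f0; rewrite ac cb.
  rewrite -/G subr_le0 Gl ler_pdivrMr ?mulr_gt0//.
  have -> : (c `^ alpha - a `^ alpha) / alpha * (alpha * (b - a)) =
    (c `^ alpha - a `^ alpha) * (b - a) by field; rewrite gt_eqF.
  have -> : l = c - a by rewrite /c; ring.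
  exact: conc.
Qed.
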